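(* Let $\mathcal{D}$ be a $\{K_3,K_4\}$-decomposition of $K_{18}$ with $\alpha=13$, let $W$ be the set of vertices $x$ with $\alpha_x\ge 2$, and for $i\in\{0,1,2,3\}$ let $t_i$ be the number of copies of $K_3$ in $\mathcal{D}$ having exactly $i$ vertices in $W$. Then $(t_0,t_1,t_2,t_3)\neq(0,1,9,3)$.
   Context: A $\{K_3,K_4\}$-decomposition of $K_v$ is a collection of subgraphs, each isomorphic to $K_3$ or $K_4$, such that every edge of $K_v$ lies in exactly one of them. $\alpha$ is the number of copies of $K_3$ in the decomposition, and for a vertex $x$, $\alpha_x$ is the number of copies of $K_3$ in the decomposition containing $x$. *)

(* Defs.v *)
From mathcomp Require Import all_boot.
Set Implicit Arguments. Unset Strict Implicit. Unset Printing Implicit Defensive.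

(* A copy of K_3 or K_4 inside K_v is determined by
   its vertex set (of size 3 or 4); its edges are all pairs of its vertices. *)
Definition K34_decomposition (v : nat) (D : {set {set 'I_v}}) : Prop :=
  (forall B, B \in D -> #|B| = 3 \/ #|B| = 4) /\
  (forall x y : 'I_v, x != y ->
     #|[set B in D | (x \in B) && (y \in B)]| = 1).

Definition alpha (v : nat) (D : {set {set 'I_v}}) : nat :=
  #|[set B in D | #|B| == 3]|.

Definition alpha_x (v : nat) (D : {set {set 'I_v}}) (x : 'I_v) : nat :=
  #|[set B in D | (#|B| == 3) && (x \in B)]|.

Definition Wset (v : nat) (D : {set {set 'I_v}}) : {set 'I_v} :=
  [set x | 2 <= alpha_x D x].

Definition t_count (v : nat) (D : {set {set 'I_v}}) (i : nat) : nat :=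
  #|[set B in D | (#|B| == 3) && (#|B :&: Wset D| == i)]|.

(* Main.v *)
Require Import Defs.
From mathcomp Require Import all_boot.
From mathcomp Require Import zify.
Set Implicit Arguments. Unset Strict Implicit. Unset Printing Implicit Defensive.
Lemma card_setP (aT : finType) (P : {set aT}) (p : pred aT) :
  #|[set B in P | p B]| = \sum_(B in P) (p B : nat).
Proof.
rewrite -sum1_card big_mkcond [RHS]big_mkcond /=.
apply: eq_bigr => B _; rewrite inE; by case: (B \in P); case: (p B).
Qed.

Lemma sum_const_card (aT : finType) (P : {set aT}) (p : pred aT) c :
  \sum_(B in P | p B) c = c * #|[set B in P | p B]|.
Proof.
rewrite card_setP big_distrr /= big_mkcondr /=.
by apply: eq_bigr => B _; case: (p B); rewrite ?muln1 ?muln0.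
Qed.

Lemma dc (T : finType) (D : {set {set T}}) (p : pred {set T}) (S : {set T}) :
  \sum_(x in S) #|[set B in D | p B && (x \in B)]| = \sum_(B in D | p B) #|B :&: S|.
Proof.
under eq_bigr => x _ do rewrite card_setP.
rewrite exchange_big /= big_mkcondr /=.
apply: eq_bigr => B _.
case: (p B) => /=; last by rewrite big1.
rewrite -sum1_card big_mkcond /= [RHS]big_mkcond /=.
apply: eq_bigr => x _; rewrite inE; by case: (x \in B); case: (x \in S).
Qed.

Lemma star (T : finType) (D : {set {set T}}) (x : T) (S : {set T}) :
  (forall x y : T, x != y -> #|[set B in D | (x \in B) && (y \in B)]| = 1) ->
  x \notin S ->
  \sum_(B in D | x \in B) #|B :&: S| = #|S|.
Proof.
move=> hp hx.
have := dc D (fun B => x \in B) S; rewrite /= => <-.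
rewrite -sum1_card; apply: eq_bigr => y yS.
apply: hp; apply/eqP => exy; by rewrite exy yS in hx.
Qed.

Lemma sum_by_value (aT : finType) (P : {set aT}) (p : pred aT) (f : aT -> nat) (g : nat -> nat) n :
  (forall B, B \in P -> p B -> f B < n) ->
  \sum_(B in P | p B) g (f B) = \sum_(k < n) g k * #|[set B in P | p B && (f B == k)]|.
Proof.
move=> hf.
under [RHS]eq_bigr => k _ do rewrite card_setP big_distrr /=.
rewrite exchange_big /= big_mkcondr /=; apply: eq_bigr => B BP.
case pB: (p B) => /=; last by rewrite big1 // => k _; rewrite muln0.
have lt := hf B BP pB.
rewrite (bigD1 (Ordinal lt)) //= eqxx muln1 big1 ?addn0 //.
move=> k nk.
suff -> : (f B == k) = false by rewrite muln0.
apply/negbTE/eqP => e; move/eqP: nk; apply; apply: val_inj => /=; by rewrite e.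
Qed.

Lemma split34 (T : finType) (D : {set {set T}}) (q : pred {set T}) (F : {set T} -> nat) :
  (forall B, B \in D -> #|B| = 3 \/ #|B| = 4) ->
  \sum_(B in D | q B) F B =
  \sum_(B in D | (#|B| == 3) && q B) F B + \sum_(B in D | (#|B| == 4) && q B) F B.
Proof.
move=> hsz; rewrite (bigID (fun B : {set T} => #|B| == 3)) /=.
congr (_ + _); apply: eq_bigl => B; case BD: (B \in D) => //=.
  by rewrite andbC.
by case: (hsz B BD) => ->; rewrite ?andbF ?andbT.
Qed.

Lemma pair_le1 (T : finType) (D : {set {set T}}) (B N : {set T}) :
  (forall x y : T, x != y -> #|[set B in D | (x \in B) && (y \in B)]| = 1) ->
  B \in D -> N \in D -> B != N -> #|B :&: N| <= 1.
Proof.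
move=> hp BD ND nBN; rewrite leqNgt; apply/negP => /card_gt1P [y [y' [h1 h2 ny]]].
have := hp y y' ny.
move: h1 h2; rewrite !inE => /andP [yB yN] /andP [y'B y'N].
have sub : [set B; N] \subset [set B0 in D | (y \in B0) && (y' \in B0)].
  by apply/subsetP => C; rewrite !inE => /orP [] /eqP ->; rewrite ?BD ?ND ?yB ?y'B ?yN ?y'N.
have := subset_leq_card sub; rewrite cards2 nBN => h e; by rewrite e in h.
Qed.

Definition beta_x v (D : {set {set 'I_v}}) (x : 'I_v) :=
  #|[set B in D | (#|B| == 4) && (x \in B)]|.

Lemma local v (D : {set {set 'I_v}}) (y : 'I_v) (S : {set 'I_v}) :
  K34_decomposition D -> y \notin S ->
  \sum_(B in D | (#|B| == 3) && (y \in B)) #|B :&: S|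
  + \sum_(B in D | (#|B| == 4) && (y \in B)) #|B :&: S| = #|S|.
Proof.
move=> [hsz hp] yS; rewrite -(split34 (fun B => y \in B)) //; exact: star.
Qed.

Lemma degree v (D : {set {set 'I_v}}) (x : 'I_v) :
  K34_decomposition D -> 2 * alpha_x D x + 3 * beta_x D x = v.-1.
Proof.
move=> hD; have := @local _ D x (~: [set x]) hD.
rewrite !inE eqxx => /(_ isT).
rewrite cardsC1 card_ord => <-.
rewrite /alpha_x /beta_x -!sum_const_card; congr (_ + _); apply: eq_bigr => B /andP [_ /andP [/eqP hB xB]];
  rewrite -setDE; have := cardsD1 x B; rewrite xB hB /= add1n => -[->] //.
Qed.

Lemma dcw (T : finType) (D : {set {set T}}) (p : pred {set T}) (S : {set T}) (h : {set T} -> nat) :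
  \sum_(x in S) \sum_(B in D | p B && (x \in B)) h B = \sum_(B in D | p B) h B * #|B :&: S|.
Proof.
under eq_bigr => x _ do rewrite big_mkcondr /=.
rewrite exchange_big /= [RHS]big_mkcondr /=.
apply: eq_bigr => B _.
case: (p B) => /=; last by rewrite big1.
rewrite -big_mkcondr /= sum_const_card; congr (_ * _).
by apply: eq_card => x; rewrite !inE andbC.
Qed.

Theorem mainTheorem16 (D : {set {set 'I_18}}) :
  K34_decomposition D -> alpha D = 13 ->
  (t_count D 0, t_count D 1, t_count D 2, t_count D 3) <> (0, 1, 9, 3).
Proof.
move=> hD hal [t0 t1 t2 t3].
have [hsz hp] := hD.
set W := Wset D.
have deg x : 2 * alpha_x D x + 3 * beta_x D x = 17 := degree x hD.
have inW x : (x \in W) = (2 <= alpha_x D x) by rewrite inE.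
have a_nW x : x \notin W -> alpha_x D x = 1.
  rewrite inW -ltnNge => h; have := deg x; lia.
have a_W x : x \in W -> 4 <= alpha_x D x.
  rewrite inW => h; have := deg x; lia.
have te k : #|[set B in D | (#|B| == 3) && (#|B :&: W| == k)]| = t_count D k := erefl.
have bnd3 (S : {set 'I_18}) : forall B, B \in D -> #|B| == 3 -> #|B :&: S| < 4.
  move=> B _ /eqP h; apply: leq_ltn_trans (subset_leq_card (subsetIl B S)) _; by rewrite h.
have sumTW : \sum_(B in D | #|B| == 3) #|B :&: W| = 28.
  have := @sum_by_value _ D (fun B => #|B| == 3) (fun B => #|B :&: W|) (fun k => k) 4 (bnd3 W).
  rewrite /= => ->; rewrite !big_ord_recr big_ord0 /= !te t1 t2 t3 //.
have sumTnW : \sum_(B in D | #|B| == 3) #|B :&: ~: W| = 11.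
  rewrite (eq_bigr (fun B => 3 - #|B :&: W|)); last first.
    move=> B /andP [_ /eqP hB]; have := cardsID W B; rewrite -setDE hB; lia.
  have := @sum_by_value _ D (fun B => #|B| == 3) (fun B => #|B :&: W|) (fun k => 3 - k) 4 (bnd3 W).
  rewrite /= => ->; rewrite !big_ord_recr big_ord0 /= !te t0 t1 t2 t3 //.
have aW : \sum_(x in W) alpha_x D x = 28 := etrans (@dc _ D (fun B => #|B| == 3) W) sumTW.
have anW : \sum_(x in ~: W) alpha_x D x = 11 := etrans (@dc _ D (fun B => #|B| == 3) (~: W)) sumTnW.
have cW : #|W| = 7.
  have : #|~: W| = 11.
    apply: etrans anW; rewrite -sum1_card; apply: eq_bigr => x; rewrite inE => /a_nW -> //.
  have := cardsC W; rewrite card_ord; lia.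
have a4 x : x \in W -> alpha_x D x = 4.
  move=> xW.
  have e : \sum_(y in W) alpha_x D y = \sum_(y in W) (alpha_x D y - 4) + \sum_(y in W) 4.
    rewrite -big_split /=; apply: eq_bigr => y /a_W; lia.
  rewrite aW sum_nat_const cW /= in e.
  move/eqP: e; rewrite -{1}[28]/(0 + 7 * 4) eqn_add2r eq_sym sum_nat_eq0 => /forall_inP /(_ x xW) /eqP.
  have := a_W x xW; lia.
have b3 x : x \in W -> beta_x D x = 3 by move=> /a4 h; have := deg x; lia.
have b5 x : x \notin W -> beta_x D x = 5 by move=> /a_nW h; have := deg x; lia.
have cnW : #|~: W| = 11 by have := cardsC W; rewrite card_ord cW; lia.
have sQW : \sum_(B in D | #|B| == 4) #|B :&: W| = 21.
  have := @dc _ D (fun B => #|B| == 4) W; rewrite /= => <-.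
  rewrite (eq_bigr (fun _ => 3)) ?sum_nat_const ?cW // => x xW; exact: b3 x xW.
have sQT : \sum_(B in D | #|B| == 4) 4 = 76.
  rewrite (eq_bigr (fun B => #|B :&: setT|)); last by move=> B /andP [_ /eqP h]; rewrite setIT h.
  have := @dc _ D (fun B => #|B| == 4) setT; rewrite /= => <-.
  rewrite (big_setID W) setTI setTD /=.
  rewrite (eq_bigr (fun _ => 3)); last by move=> x xW; exact: b3 x xW.
  rewrite [X in _ + X](eq_bigr (fun _ => 5)); last by move=> x; rewrite inE => xW; exact: b5 x xW.
  by rewrite !sum_nat_const cW cnW.
have F6 : \sum_(x in W) \sum_(B in D | x \in B) (#|B :&: W| - 1) = 42.
  rewrite (eq_bigr (fun _ => 6)); first by rewrite sum_nat_const cW.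
  move=> x xW.
  have := @star _ D x (W :\ x) hp; rewrite !inE eqxx => /(_ isT) st.
  have c6 : #|W :\ x| = 6 by have := cardsD1 x W; rewrite xW cW; lia.
  apply: etrans _ c6; apply: etrans _ st; apply: eq_bigr => B /andP [_ xB].
  by rewrite setIDA (cardsD1 x (B :&: W)) inE xB xW /= add1n subn1.
have sQ2 : \sum_(B in D | #|B| == 4) (#|B :&: W| - 1) * #|B :&: W| = 6.
  move: F6.
  under eq_bigr => x _ do rewrite (@split34 _ D (fun B => x \in B) (fun B => #|B :&: W| - 1) hsz).
  rewrite big_split /= !dcw.
  have := @sum_by_value _ D (fun B => #|B| == 3) (fun B => #|B :&: W|) (fun k => (k - 1) * k) 4 (bnd3 W).
  rewrite /= => ->; rewrite !big_ord_recr big_ord0 /= !te t0 t1 t2 t3 /=.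
  move=> h; have h2 : 36 + \sum_(B in D | #|B| == 4) (#|B :&: W| - 1) * #|B :&: W| = 36 + 6 := h.
  by move/eqP: h2; rewrite eqn_add2l => /eqP.
pose cq k := #|[set B in D | (#|B| == 4) && (#|B :&: W| == k)]|.
have bnd4 : forall B, B \in D -> #|B| == 4 -> #|B :&: W| < 5.
  move=> B _ /eqP h; apply: leq_ltn_trans (subset_leq_card (subsetIl B W)) _; by rewrite h.
have E1 : 4 * cq 0 + 4 * cq 1 + 4 * cq 2 + 4 * cq 3 + 4 * cq 4 = 76.
  have := esym (@sum_by_value _ D (fun B => #|B| == 4) (fun B => #|B :&: W|) (fun _ => 4) 5 bnd4).
  rewrite !big_ord_recr big_ord0 /= add0n => e; exact: etrans e sQT.
have E2 : 0 * cq 0 + 1 * cq 1 + 2 * cq 2 + 3 * cq 3 + 4 * cq 4 = 21.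
  have := esym (@sum_by_value _ D (fun B => #|B| == 4) (fun B => #|B :&: W|) (fun k => k) 5 bnd4).
  rewrite !big_ord_recr big_ord0 /= add0n => e; exact: etrans e sQW.
have E3 : 0 * cq 0 + 0 * cq 1 + 2 * cq 2 + 6 * cq 3 + 12 * cq 4 = 6.
  have := esym (@sum_by_value _ D (fun B => #|B| == 4) (fun B => #|B :&: W|) (fun k => (k - 1) * k) 5 bnd4).
  rewrite !big_ord_recr big_ord0 /= add0n => e; exact: etrans e sQ2.
pose dq y k := #|[set B in D | ((#|B| == 4) && (y \in B)) && (#|B :&: W| == k)]|.
have dqle y k : dq y k <= cq k.
  apply: subset_leq_card; apply/subsetP => B; rewrite !inE.
  by case/andP => -> /andP [/andP [-> _] ->].
have bnd4y y : forall B, B \in D -> (#|B| == 4) && (y \in B) -> #|B :&: W| < 5.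
  by move=> B BD /andP [h _]; exact: bnd4.
have dsum y : y \notin W -> dq y 0 + dq y 1 + dq y 2 + dq y 3 + dq y 4 = 5.
  move=> yW; have := esym (@sum_by_value _ D (fun B => (#|B| == 4) && (y \in B)) (fun B => #|B :&: W|) (fun _ => 1) 5 (bnd4y y)).
  rewrite !big_ord_recr big_ord0 /= add0n !mul1n => e; apply: etrans e _.
  rewrite sum_const_card mul1n; exact: b5.
have dw y : 0 * dq y 0 + 1 * dq y 1 + 2 * dq y 2 + 3 * dq y 3 + 4 * dq y 4 =
    \sum_(B in D | (#|B| == 4) && (y \in B)) #|B :&: W|.
  have := esym (@sum_by_value _ D (fun B => (#|B| == 4) && (y \in B)) (fun B => #|B :&: W|) (fun k => k) 5 (bnd4y y)).
  by rewrite !big_ord_recr big_ord0 /= add0n.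
have tri y : y \notin W -> \sum_(B in D | (#|B| == 3) && (y \in B)) #|B :&: W| +
    \sum_(B in D | (#|B| == 4) && (y \in B)) #|B :&: W| = 7.
  move=> yW; exact: etrans (@local _ D y W hD yW) cW.
have [[c0 [c1 [c2 [c3 c4]]]] | [c0 [c1 [c2 [c3 c4]]]]] :
  (cq 0 = 0 /\ cq 1 = 18 /\ cq 2 = 0 /\ cq 3 = 1 /\ cq 4 = 0) \/
  (cq 0 = 1 /\ cq 1 = 15 /\ cq 2 = 3 /\ cq 3 = 0 /\ cq 4 = 0) by lia.
- have /cards1P [B0 hB0] : #|[set B in D | (#|B| == 3) && (#|B :&: W| == 1)]| == 1 by rewrite te t1.
  have : B0 \in [set B0] := set11 B0.
  rewrite -hB0 !inE => /andP [B0D /andP [/eqP hB03 /eqP hB0W]].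
  have : 0 < #|B0 :\: W|.
    have := cardsID W B0; rewrite hB03 hB0W => e.
    rewrite lt0n; apply/eqP => e0; rewrite e0 in e; lia.
  move/card_gt0P => [y]; rewrite inE => /andP [yW yB0].
  have /cards1P [B1 hB1] : alpha_x D y == 1 by rewrite a_nW.
  have B01 : [set B in D | (#|B| == 3) && (y \in B)] = [set B0].
    rewrite /alpha_x in hB1; rewrite hB1.
    have : B0 \in [set B in D | (#|B| == 3) && (y \in B)] by rewrite inE B0D hB03 yB0.
    by rewrite hB1 inE => /eqP ->.
  have S3 : \sum_(B in D | (#|B| == 3) && (y \in B)) #|B :&: W| = 1.
    rewrite (eq_bigl (fun B => B \in [set B0])) ?big_set1 ?hB0W // => B /=.
    by rewrite -B01 inE.
  have := tri y yW; rewrite S3 => T.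
  have := dw y; have := dsum y yW; have := dqle y 0; have := dqle y 2; have := dqle y 3; have := dqle y 4.
  rewrite c0 c2 c3 c4; lia.
- have /cards1P [N hN] : cq 0 == 1 by rewrite c0.
  have : N \in [set N] := set11 N.
  rewrite /cq -hN !inE => /andP [ND /andP [/eqP hN4 /eqP hNW]].
  have NW y : y \in N -> y \notin W.
    move=> yN; apply/negP => yW.
    have : y \in N :&: W by rewrite inE yN yW.
    by rewrite (cards0_eq hNW) inE.
  have d2 y : y \in N -> 1 <= dq y 2.
    move=> yN; have yW := NW y yN.
    have S3 : \sum_(B in D | (#|B| == 3) && (y \in B)) #|B :&: W| <= 2.
      apply: (@leq_trans (\sum_(B in D | (#|B| == 3) && (y \in B)) 2)).
        apply: leq_sum => B /andP [_ /andP [/eqP hB yB]].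
        have : #|B :\ y| = 2 by have := cardsD1 y B; rewrite yB hB add1n => -[e]; rewrite -e.
        move=> e2; apply: (@leq_trans #|B :\ y|); last by rewrite e2.
        apply: subset_leq_card; apply/subsetP => z; rewrite !inE => /andP [zB zW].
        rewrite zB andbT; apply/eqP => e; by rewrite -e inW zW in yW.
      by rewrite sum_const_card -/(alpha_x D y) a_nW.
    have d0 : 0 < dq y 0 by apply/card_gt0P; exists N; rewrite !inE ND hN4 yN hNW !eqxx.
    have := tri y yW; have := dw y; have := dsum y yW; have := dqle y 3; have := dqle y 4.
    rewrite c3 c4; lia.
  have cN : #|N| = 4 := hN4.
  have := @dc _ D (fun B => (#|B| == 4) && (#|B :&: W| == 2)) N; rewrite /= => e.
  have L : \sum_(y in N) 1 <= \sum_(y in N) #|[set B in D | ((#|B| == 4) && (#|B :&: W| == 2)) && (y \in B)]|.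
    apply: leq_sum => y yN; apply: leq_trans (d2 y yN) _; rewrite /dq.
    apply: subset_leq_card; apply/subsetP => B; rewrite !inE.
    by case: (B \in D); case: (#|B| == 4); case: (y \in B); case: (#|B :&: W| == 2).
  rewrite e sum1_card cN in L.
  have R : \sum_(B in D | (#|B| == 4) && (#|B :&: W| == 2)) #|B :&: N| <= 3.
    apply: (@leq_trans (\sum_(B in D | (#|B| == 4) && (#|B :&: W| == 2)) 1)).
      apply: leq_sum => B /andP [BD /andP [_ /eqP h2]]; apply: (pair_le1 hp) => //.
      by apply/eqP => eBN; rewrite eBN hNW in h2.
    by rewrite sum_const_card mul1n -/(cq 2) c2.
  by have := leq_trans L R.
Qed.
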